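(* Let $I$ be (the matrix of) a te-interlace and let $p$ be a pivot of $I$. Then every nonzero entry of $I/\!\!/p$ has absolute value $2$, and in the $\{0,\pm1\}$-matrix $\tfrac12(I/\!\!/p)$ no two rows form a te-lace. In particular, the rows of $\tfrac12(I/\!\!/p)$ contain no te-interlace.
   Context: A set of vectors is identified with the matrix whose rows are these vectors. A matrix is totally equimodular if every set of linearly independent rows forms a matrix of full row rank whose nonzero maximal minors all have the same absolute value, and totally unimodular if all its square submatrices have determinant in $\{0,\pm1\}$. A linearly independent set of $\{0,\pm1\}$-vectors is a te-set if its matrix is totally equimodular, a tu-set if its matrix is totally unimodular, a te-lace if it is a te-set, not a tu-set, and all its proper subsets are tu-sets, and a te-interlace if it is a te-set, not a tu-set, and every pair of its vectors is a te-lace. A pivot is a position $p=(i,j)$ with nonzero entry; $I/p$ is obtained by dividing row $i$ by that entry and adding multiples of it to the other rows so that column $j$ becomes the $i$-th unit vector; the trim $I/\!\!/p$ is obtained from $I/p$ by deleting row $i$ and column $j$. *)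

(* Defs.v *)
(* Matrices over the rationals; a set of vectors is the
   matrix whose rows are these vectors. *)
From HB Require Import structures.
From mathcomp Require Import all_boot all_order all_algebra.
Set Implicit Arguments. Unset Strict Implicit. Unset Printing Implicit Defensive.
Import Order.TTheory GRing.Theory Num.Theory.
Local Open Scope ring_scope.

Definition is01 (m n : nat) (A : 'M[rat]_(m, n)) : Prop :=
  forall i j, A i j \in [:: 0; 1; -1].

(* the nonzero maximal minors of a k x n matrix all have the same absolute
   value (a column selection g : 'I_k -> 'I_n that is not injective gives a
   zero minor, and reordering columns only changes the sign) *)
Definition equal_abs_maxminors (k n : nat) (A : 'M[rat]_(k, n)) : Prop :=
  forall g1 g2 : 'I_k -> 'I_n,
    \det (colsub g1 A) != 0 -> \det (colsub g2 A) != 0 ->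
    `|\det (colsub g1 A)| = `|\det (colsub g2 A)|.

Definition totally_equimodular (m n : nat) (A : 'M[rat]_(m, n)) : Prop :=
  forall (k : nat) (f : 'I_k -> 'I_m), injective f ->
    row_free (rowsub f A) ->
    row_free (rowsub f A) /\ equal_abs_maxminors (rowsub f A).

Definition totally_unimodular (m n : nat) (A : 'M[rat]_(m, n)) : Prop :=
  forall (k : nat) (f : 'I_k -> 'I_m) (g : 'I_k -> 'I_n),
    \det (mxsub f g A) \in [:: 0; 1; -1].

Definition te_set (m n : nat) (A : 'M[rat]_(m, n)) : Prop :=
  is01 A /\ row_free A /\ totally_equimodular A.

Definition tu_set (m n : nat) (A : 'M[rat]_(m, n)) : Prop :=
  is01 A /\ row_free A /\ totally_unimodular A.

Definition te_lace (m n : nat) (A : 'M[rat]_(m, n)) : Prop :=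
  te_set A /\ ~ tu_set A /\
  forall (k : nat) (f : 'I_k -> 'I_m), injective f -> (k < m)%N ->
    tu_set (rowsub f A).

Definition two_rows (m n : nat) (A : 'M[rat]_(m, n)) (i j : 'I_m) : 'M[rat]_(2, n) :=
  rowsub (fun r : 'I_2 => if r == ord0 then i else j) A.

Definition te_interlace (m n : nat) (A : 'M[rat]_(m, n)) : Prop :=
  te_set A /\ ~ tu_set A /\
  forall i j : 'I_m, i != j -> te_lace (two_rows A i j).

(* I/p for p = (i,j): divide row i by I i j, and subtract multiples of it from
   the other rows so that column j becomes the i-th unit vector *)
Definition pivot_mx (m n : nat) (A : 'M[rat]_(m, n)) (i : 'I_m) (j : 'I_n)
  : 'M[rat]_(m, n) :=
  \matrix_(k, l) if k == i then A i l / A i j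
                 else A k l - A k j * (A i l / A i j).

Definition trim_mx (m n : nat) (A : 'M[rat]_(m.+1, n.+1)) (i : 'I_m.+1)
  (j : 'I_n.+1) : 'M[rat]_(m, n) :=
  row' i (col' j (pivot_mx A i j)).

(* Main.v *)
Require Import Defs.
From mathcomp Require Import all_boot all_order all_algebra.
From mathcomp Require Import ring lra.
From Stdlib Require Import Classical.
Import Order.TTheory GRing.Theory Num.Theory.
Local Open Scope ring_scope.

Lemma det2 (R : comNzRingType) (A : 'M[R]_2) :
  \det A = A 0 0 * A 1 1 - A 0 1 * A 1 0.
Proof.
rewrite (expand_det_row _ ord0) !big_ord_recl big_ord0 /cofactor !det_mx11 !mxE /=.
rewrite addr0 expr0 expr1 !mul1r.
have -> : lift ord0 0 = 1 :> 'I_2 by apply/val_inj.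
have -> : lift 1 0 = 0 :> 'I_2 by apply/val_inj.
by rewrite mulN1r mulrN.
Qed.

Lemma det_eqrows (R : comNzRingType) k k' n (f : 'I_k -> 'I_k') g (A : 'M[R]_(k', n)) i1 i2 :
  i1 != i2 -> f i1 = f i2 -> \det (mxsub f g A) = 0.
Proof. by move=> ne e; apply: (determinant_alternate ne) => l; rewrite !mxE e. Qed.
Arguments det_eqrows {R k k' n f g A i1 i2}.

Definition in01 (x : rat) := x \in [:: 0; 1; -1].
Lemma min2 (p q r u : rat) : in01 p -> in01 q -> in01 r -> in01 u ->
  ~~ in01 (p * q - r * u) -> [/\ p != 0, q != 0, r != 0 & u != 0] /\ `|p*q - r*u| = 2.
Proof.
rewrite /in01 !inE.
by do 4 (case/or3P => /eqP ->); vm_compute => //; split.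
Qed.

Lemma entry (e x y s : rat) : in01 e -> in01 x -> in01 y -> in01 s -> s != 0 ->
  in01 (2^-1 * (e - x * (y / s))) -> 2^-1 * (e - x * (y / s)) != 0 ->
  2^-1 * (e - x * (y / s)) = - (x * y / s).
Proof.
rewrite /in01 !inE.
by do 4 (case/or3P => /eqP ->); vm_compute.
Qed.

Lemma in01N x : in01 x -> in01 (- x).
Proof. rewrite /in01 !inE; by case/or3P => /eqP ->; vm_compute. Qed.

Lemma tu2 n (N : 'M[rat]_(2, n)) : is01 N ->
  (forall g : 'I_2 -> 'I_n, in01 (\det (colsub g N))) -> totally_unimodular N.
Proof.
move=> h01 hg [|[|[|k]]] f g.
- by rewrite det_mx00 !inE eqxx.
- by rewrite det_mx11 mxE; apply: h01.
- have e01 : (ord0 : 'I_2) != 1 by [].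
  case E: (f 0 == f 1); first by rewrite (det_eqrows e01 (eqP E)) !inE eqxx.
  have := hg g; rewrite !det2 !mxE.
  move: E; case: (f 0) => [[|[|?]] p0]; case: (f 1) => [[|[|?]] p1] //= _.
  + have -> : Ordinal p0 = 0 by apply/val_inj. have -> : Ordinal p1 = 1 by apply/val_inj. done.
  + have -> : Ordinal p0 = 1 by apply/val_inj. have -> : Ordinal p1 = 0 by apply/val_inj.
    move/in01N; congr in01; ring.
- pose i0 : 'I_k.+3 := ord0. pose i1 : 'I_k.+3 := lift ord0 ord0.
  pose i2 : 'I_k.+3 := lift ord0 (lift ord0 ord0).
  case E01: (f i0 == f i1); first by rewrite (det_eqrows _ (eqP E01)) // !inE eqxx.
  case E02: (f i0 == f i2); first by rewrite (det_eqrows _ (eqP E02)) // !inE eqxx.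
  case E12: (f i1 == f i2); first by rewrite (det_eqrows _ (eqP E12)) // !inE eqxx.
  move: E01 E02 E12; case: (f i0) => [[|[|?]] ?]; case: (f i1) => [[|[|?]] ?] //;
    case: (f i2) => [[|[|?]] ?] //.
Qed.

Lemma tu1 k n (A : 'M[rat]_(k, n)) : (k <= 1)%N -> is01 A -> totally_unimodular A.
Proof.
move=> hk h01 [|[|k']] f g.
- by rewrite det_mx00 !inE eqxx.
- by rewrite det_mx11 mxE; apply: h01.
- have e : f 0 = f 1.
    apply/val_inj; have := ltn_ord (f 0); have := ltn_ord (f 1); move: hk.
    by case: k f {h01 A} => [|[|?]] f //= _; case: (f 0) => [[|?] ?]; case: (f 1) => [[|?] ?].
  by rewrite (det_eqrows _ e) // !inE eqxx.
Qed.

Arguments min2 {p q r u}. Arguments entry {e x y s}.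

Lemma core2 (s x1 x2 y1 y2 e11 e12 e21 e22 : rat) :
  in01 s -> s != 0 -> in01 x1 -> in01 x2 -> in01 y1 -> in01 y2 ->
  in01 e11 -> in01 e12 -> in01 e21 -> in01 e22 ->
  in01 (2^-1 * (e11 - x1 * (y1 / s))) -> in01 (2^-1 * (e12 - x1 * (y2 / s))) ->
  in01 (2^-1 * (e21 - x2 * (y1 / s))) -> in01 (2^-1 * (e22 - x2 * (y2 / s))) ->
  in01 (2^-1 * (e11 - x1 * (y1 / s)) * (2^-1 * (e22 - x2 * (y2 / s)))
       - 2^-1 * (e12 - x1 * (y2 / s)) * (2^-1 * (e21 - x2 * (y1 / s)))).
Proof.
move=> hs s0 hx1 hx2 hy1 hy2 h11 h12 h21 h22 v11 v12 v21 v22.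
case: (boolP (in01 _)) => // hn.
have [[n11 n22 n12 n21] _] := min2 v11 v22 v12 v21 hn.
move: hn.
rewrite (entry h11 hx1 hy1 hs s0 v11 n11) (entry h22 hx2 hy2 hs s0 v22 n22).
rewrite (entry h12 hx1 hy2 hs s0 v12 n12) (entry h21 hx2 hy1 hs s0 v21 n21).
have -> : - (x1 * y1 / s) * - (x2 * y2 / s) - - (x1 * y2 / s) * - (x2 * y1 / s) = 0.
  by field.
by [].
Qed.

Arguments core2 {s x1 x2 y1 y2 e11 e12 e21 e22}.

Lemma abs01 s : in01 s -> s != 0 -> `|s| = 1.
Proof. rewrite /in01 !inE; by case/or3P => /eqP ->; vm_compute. Qed.
Arguments abs01 {s}.

Theorem mainTheorem7 (m n : nat) (I : 'M[rat]_(m.+1, n.+1))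
  (i : 'I_m.+1) (j : 'I_n.+1) :
  te_interlace I -> I i j != 0 ->
  [/\ (forall k l, trim_mx I i j k l != 0 -> `|trim_mx I i j k l| = 2),
      (forall k1 k2 : 'I_m, k1 != k2 ->
         ~ te_lace (two_rows (2^-1 *: trim_mx I i j) k1 k2))
    & (forall (k : nat) (f : 'I_k -> 'I_m), injective f ->
         ~ te_interlace (rowsub f (2^-1 *: trim_mx I i j)))].
Proof.
move=> [[I01 [Ifree Ite]] [Intu Hpair]] s0.
have hs : in01 (I i j) := I01 i j.
have trimE k l : trim_mx I i j k l =
    I (lift i k) (lift j l) - I (lift i k) j * (I i (lift j l) / I i j).
  by rewrite /trim_mx !mxE eq_sym (negbTE (neq_lift i k)).
have P1 : forall k l, trim_mx I i j k l != 0 -> `|trim_mx I i j k l| = 2.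
  move=> k l; set a := lift i k; set c := lift j l.
  have ia : i != a by exact: neq_lift.
  have [[P01 [Pfree Pte]] [Pntu _]] := Hpair i a ia.
  set P := two_rows I i a in P01 Pfree Pte Pntu.
  have [g0 Hg0] : exists g, ~~ in01 (\det (colsub g P)).
    apply: NNPP => H; apply: Pntu; split => //; split => //; apply: tu2 => // g.
    case: (boolP (in01 _)) => // hn; exfalso; apply: H; by exists g.
  have rid : rowsub id P = P by apply/matrixP => r c'; rewrite !mxE.
  have [_ Heq] := Pte 2 id (@inj_id _) ltac:(by rewrite rid).
  rewrite rid in Heq.
  pose g1 : 'I_2 -> 'I_n.+1 := fun r => if r == ord0 then j else c.
  have d1 : \det (colsub g1 P) = I i j * I a c - I i c * I a j.
    by rewrite det2 !mxE /g1 /=.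
  have := Hg0; rewrite det2 => Hg0'.
  have C01 r c' : in01 (colsub g0 P r c') by rewrite mxE; apply: P01.
  have [_ a0] := min2 (C01 _ _) (C01 _ _) (C01 _ _) (C01 _ _) Hg0'.
  rewrite -det2 in a0.
  rewrite trimE -/a -/c => t0.
  have tE : I a c - I a j * (I i c / I i j) = (I i j * I a c - I i c * I a j) / I i j.
    by field.
  rewrite tE in t0 *; rewrite -d1 in t0 *.
  have dnz : \det (colsub g1 P) != 0 by move: t0; apply: contra => /eqP ->; rewrite mul0r.
  have d0nz : \det (colsub g0 P) != 0 by rewrite -normr_eq0 a0.
  by rewrite normrM normrV ?unitfE // (abs01 hs s0) invr1 mulr1 (Heq g1 g0 dnz d0nz).
have P2 : forall k1 k2 : 'I_m, k1 != k2 ->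
         ~ te_lace (two_rows (2^-1 *: trim_mx I i j) k1 k2).
  move=> k1 k2 k12 [[N01 [Nfree _]] [Nntu _]].
  set N := two_rows _ k1 k2 in N01 Nfree Nntu.
  apply: Nntu; split => //; split => //; apply: tu2 => // g.
  have N0 c : N 0 c = 2^-1 * (I (lift i k1) (lift j c)
      - I (lift i k1) j * (I i (lift j c) / I i j)) by rewrite -trimE !mxE.
  have N1 c : N 1 c = 2^-1 * (I (lift i k2) (lift j c)
      - I (lift i k2) j * (I i (lift j c) / I i j)) by rewrite -trimE !mxE.
  have cE r c : colsub g N r c = N r (g c) by rewrite mxE.
  rewrite det2 !cE !N0 !N1.
  have := N01 0 (g 0); have := N01 0 (g 1); have := N01 1 (g 0); have := N01 1 (g 1).
  rewrite !N0 !N1 => v22 v21 v12 v11.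
  exact: (core2 hs s0 (I01 _ _) (I01 _ _) (I01 _ _) (I01 _ _) (I01 _ _) (I01 _ _) (I01 _ _) (I01 _ _) v11 v12 v21 v22).
split => //.
move=> k f finj [[M01 [Mfree _]] [Mntu Mpairs]].
case: k f finj M01 Mfree Mntu Mpairs => [|[|k]] f finj M01 Mfree Mntu Mpairs.
- by apply: Mntu; split => //; split => //; apply: tu1.
- by apply: Mntu; split => //; split => //; apply: tu1.
pose a : 'I_k.+2 := ord0. pose b : 'I_k.+2 := lift ord0 ord0.
have ab : a != b by [].
have := Mpairs a b ab.
have -> : two_rows (rowsub f (2^-1 *: trim_mx I i j)) a b
        = two_rows (2^-1 *: trim_mx I i j) (f a) (f b).
  by apply/matrixP => r c; rewrite !mxE; case: (r == ord0).
apply: P2; apply/negP => /eqP /finj /eqP; exact/negP.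
Qed.
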